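(* For a (real or complex) variable $z$ and integers $K\ge0$ let $b_K(z)=\sum_{k=0}^{K}C_k\binom{K+k}{K-k}z^k$, where $C_k=\frac{1}{k+1}\binom{2k}{k}$ are the Catalan numbers. Then for $K\ge2$, $$(K+1)b_K(z)=(2K-1)(1+2z)b_{K-1}(z)-(K-2)b_{K-2}(z),$$ and for $K\ge0$, $$b_{K+1}(z)=b_K(z)+z\sum_{l=0}^{K}b_l(z)b_{K-l}(z),$$ with $b_0(z)=1$ and $b_1(z)=1+z$. *)

(* Defs.v *)
From mathcomp Require Import all_boot all_order all_algebra.
Set Implicit Arguments. Unset Strict Implicit. Unset Printing Implicit Defensive.
Import GRing.Theory Num.Theory.
Local Open Scope ring_scope.

(* Catalan numbers C_k = binom(2k,k)/(k+1) (exact division in nat). *)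
Definition catalan (k : nat) : nat := ('C(k.*2, k) %/ k.+1)%N.

Definition bK (R : ringType) (K : nat) (z : R) : R :=
  \sum_(0 <= k < K.+1) ((catalan k * 'C(K + k, K - k))%N)%:R * z ^+ k.

(* Main.v *)
Require Import Defs.
From mathcomp Require Import all_boot all_order all_algebra.
From mathcomp Require Import zify ring lra.
Import GRing.Theory Num.Theory.

Lemma catalanE k : (k.+1 * catalan k)%N = 'C(k.*2, k).
Proof.
rewrite /catalan mulnC divnK //.
have h := mul_bin_left k.*2 k.
have e : (k.*2 - k = k)%N by lia.
rewrite e in h.
apply/dvdnP; exists ('C(k.*2, k) - 'C(k.*2, k.+1))%N.
rewrite mulnBl [X in (_ - X)%N]mulnC h; lia.
Qed.

Lemma catalanS k : ((k.+2) * catalan k.+1 = 2 * (k.*2.+1) * catalan k)%N.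
Proof.
apply/eqP; rewrite -(eqn_pmul2l (ltn0Sn k)); apply/eqP.
have h1 := catalanE k.+1. have h0 := catalanE k.
have d1 := mul_bin_diag (k.*2.+2) k.
have d0 := mul_bin_diag (k.*2.+1) k.
have s : 'C(k.*2.+1, k.+1) = 'C(k.*2.+1, k).
  have e : (k.*2.+1 - k = k.+1)%N by lia.
  rewrite -{1}e bin_sub //; lia.
rewrite doubleS in h1.
simpl in d1, d0. rewrite s in d0.
apply/eqP; rewrite -(eqn_pmul2l (ltn0Sn k)); apply/eqP.
transitivity (k.+1 * ((k.+2 * catalan k.+1) * k.+1))%N; first lia.
rewrite h1 [(_ * k.+1)%N]mulnC -d1.
have hh : (k.+1 * 'C(k.*2.+1, k) = k.*2.+1 * (k.+1 * catalan k))%N by rewrite -d0 h0.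
rewrite mulnCA hh; nia.
Qed.

Lemma sym_sum (N : nat) (f : nat -> nat) :
  (forall i, i <= N -> f i = f (N - i)) ->
  (2 * \sum_(i < N.+1) i * f i = N * \sum_(i < N.+1) f i)%N.
Proof.
move=> hf.
have e : (\sum_(i < N.+1) i * f i = \sum_(i < N.+1) (N - i) * f i)%N.
  rewrite (reindex_inj rev_ord_inj) /=.
  apply: eq_bigr => i _; rewrite subSS.
  have hi : (i <= N)%N by rewrite -ltnS.
  rewrite hf ?leq_subr // subKn //. 
rewrite mul2n -addnn {2}e -big_split /= big_distrr /=.
apply: eq_bigr => i _.
have hi : (i <= N)%N by rewrite -ltnS.
rewrite -mulnDl subnKC //.
Qed.

Definition Tc N := (\sum_(i < N.+1) catalan i * catalan (N - i))%N.

Lemma catalan0 : catalan 0 = 1%N. Proof. by []. Qed.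
Lemma catalan1 : catalan 1 = 1%N. Proof. by []. Qed.

Lemma catalan_conv N : Tc N = catalan N.+1.
Proof.
elim: N => [|M IH]; first by rewrite /Tc big_ord1.
set N := M.+1.
pose S := (\sum_(i < N.+1) i.+1 * (catalan i * catalan (N - i)))%N.
have h1 : (2 * S = N.+2 * Tc N)%N.
  rewrite /S.
  under eq_bigr do rewrite mulSn.
  rewrite big_split /= mulnDr (@sym_sum N (fun i => catalan i * catalan (N - i))%N); last by move=> i hi; rewrite subKn // mulnC.
  by rewrite /Tc -mulnDl add2n.
have h2 : (S = catalan N + 2 * (2 * \sum_(i < M.+1) i * (catalan i * catalan (M - i)))
                 + 2 * Tc M)%N.
  rewrite /S big_ord_recl /= mul1n catalan0 mul1n subn0.
  rewrite -addnA; congr (_ + _)%N.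
  rewrite /Tc !big_distrr /= -big_split /=.
  apply: eq_bigr => i _.
  rewrite /bump /= add1n subSS mulnA catalanS /= -mul2n. ring.
rewrite (@sym_sum M (fun i => catalan i * catalan (M - i))%N) in h2; last by move=> i hi; rewrite subKn // mulnC.
rewrite -/(Tc M) IH in h2 *.
have h3 := catalanS N.
apply/eqP; rewrite -(eqn_pmul2l (ltn0Sn N.+1)); apply/eqP.
rewrite -h1 h2 h3 /N -!mul2n; ring.
Qed.

Lemma hockey a N : (\sum_(0 <= m < N.+1) 'C(m, a))%N = 'C(N.+1, a.+1).
Proof.
elim: N => [|N IH]; first by rewrite big_nat1 bin0n; case: a.
by rewrite big_nat_recr //= IH [in RHS]binS addnC.
Qed.

Lemma uv N a b :
  (\sum_(0 <= m < N.+1) 'C(m, a) * 'C(N - m, b))%N = 'C(N.+1, (a + b).+1).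
Proof.
elim: N b => [|N IH] b.
  rewrite big_nat1 sub0n; case: b => [|b]; first by rewrite addn0 muln1 bin0n; case: a.
  by rewrite bin0n muln0 bin_small //; lia.
case: b => [|b].
  rewrite addn0 -hockey; apply: eq_bigr => m _; by rewrite bin0 muln1.
rewrite big_nat_recr //= subnn bin0n muln0 addn0.
have -> : (\sum_(0 <= m < N.+1) 'C(m, a) * 'C(N.+1 - m, b.+1) =
  \sum_(0 <= m < N.+1) 'C(m, a) * 'C(N - m, b.+1) +
  \sum_(0 <= m < N.+1) 'C(m, a) * 'C(N - m, b))%N.
  rewrite -big_split /=.
  apply: eq_big_nat => m /andP [_ hm].
  rewrite subSn // binS mulnDr //.
rewrite !IH [in RHS]binS addnS.
done.
Qed.

Lemma uv_off n i j :
  (\sum_(0 <= l < n.+1) 'C(l + i, i.*2) * 'C(n - l + j, j.*2))%N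
  = 'C((n + i + j).+1, (i.*2 + j.*2).+1).
Proof.
rewrite -uv.
have h1 : (0 <= i)%N by [].
have h2 : (i <= n + i + 1)%N by lia.
have h3 : (n + i + 1 <= (n + i + j).+1)%N by lia.
rewrite (big_cat_nat h1 (leq_trans h2 h3)) /=.
rewrite (big_cat_nat h2 h3) /=.
have -> : (\sum_(0 <= m < i) 'C(m, i.*2) * 'C(n + i + j - m, j.*2) = 0)%N.
  rewrite big_nat_cond big1 // => m /andP [/andP [_ hm] _]; rewrite bin_small ?mul0n //; lia.
have -> : (\sum_(n + i + 1 <= m < (n + i + j).+1) 'C(m, i.*2) * 'C(n + i + j - m, j.*2) = 0)%N.
  rewrite big_nat_cond big1 // => m /andP [/andP [hm1 hm2] _]; rewrite [X in (_ * X)%N]bin_small ?muln0 //; lia.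
rewrite add0n addn0 -{3}(add0n i) big_addn.
have -> : (n + i + 1 - i = n.+1)%N by lia.
apply: eq_big_nat => l /andP [_ hl].
congr (_ * 'C(_, _))%N; lia.
Qed.

Local Open Scope ring_scope.

Definition dd (K k : nat) : nat := (catalan k * 'C(K + k, k.*2))%N.

Lemma lin_gen (R : numFieldType) j t :
  let n := (j + 1 + t)%N in
  (n + 3)%:R * (dd (n + 2) j.+1)%:R + n%:R * (dd n j.+1)%:R
  = (2 * n + 3)%:R * ((dd n.+1 j.+1)%:R + 2 * (dd n.+1 j)%:R) :> R.
Proof.
move=> n.
set N := (j.*2 + t + 2)%N.
set X := 'C(N, j.*2.+2). set Y := 'C(N, j.*2.+1). set G := 'C(N, j.*2).
set W3 := 'C(N.+1, j.*2.+2). set W4 := 'C(N.+2, j.*2.+2).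
have e1 : (t.+1 * W3 = N.+1 * X)%N.
  have := mul_bin_down N.+1 j.*2.+2. rewrite /= /W3 /X => ->. congr (_ * _)%N; lia.
have e2 : (t.+2 * W4 = N.+2 * W3)%N.
  have := mul_bin_down N.+2 j.*2.+2. rewrite /= /W3 /W4 => ->. congr (_ * _)%N; lia.
have e3 : (j.*2.+1 * Y = t.+2 * G)%N.
  have := mul_bin_left N j.*2. rewrite /Y /G => ->. congr (_ * _)%N; lia.
have e4 : (j.*2.+2 * X = t.+1 * Y)%N.
  have := mul_bin_left N j.*2.+1. rewrite /Y /X => ->. congr (_ * _)%N; lia.
have e5 := catalanS j.
have D1 : dd (n + 2) j.+1 = (catalan j.+1 * W4)%N.
  rewrite /dd /W4 /N /n; congr (_ * 'C(_, _))%N; lia.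
have D2 : dd n j.+1 = (catalan j.+1 * X)%N.
  rewrite /dd /X /N /n; congr (_ * 'C(_, _))%N; lia.
have D3 : dd n.+1 j.+1 = (catalan j.+1 * W3)%N.
  rewrite /dd /W3 /N /n; congr (_ * 'C(_, _))%N; lia.
have D4 : dd n.+1 j = (catalan j * G)%N.
  rewrite /dd /G /N /n; congr (_ * 'C(_, _))%N; lia.
rewrite D1 D2 D3 D4.
clearbody X Y G W3 W4.
move: (catalan j) (catalan j.+1) e5 => c0 c1 e5.
move: e1 e2 e3 e4 e5 => /(congr1 (GRing.natmul (1 : R))) e1
  /(congr1 (GRing.natmul (1 : R))) e2 /(congr1 (GRing.natmul (1 : R))) e3
  /(congr1 (GRing.natmul (1 : R))) e4 /(congr1 (GRing.natmul (1 : R))) e5.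
rewrite /N /n in e1 e2 e3 e4 *.
rewrite -!mul2n in e1 e2 e3 e4 e5 *.
rewrite !(natrM, natrD, mulrSr) in e1 e2 e3 e4 e5 *.
move: e1 e2 e3 e4 e5.
move: (X%:R) (Y%:R) (G%:R) (W3%:R) (W4%:R) (c0%:R) (c1%:R) => x y g w3 w4 d0 d1.
have hS : forall m, (m.+1)%:R != 0 :> R by move=> m; rewrite pnatr_eq0.
move=> e1 e2 e3 e4 e5.
have n1 := hS t; rewrite !(natrM, natrD, mulrSr) in n1.
have n2 := hS t.+1; rewrite !(natrM, natrD, mulrSr) in n2.
have n3 := hS (2 * j)%N; rewrite !(natrM, natrD, mulrSr) in n3.
have hw3 : w3 = ((0 + 1 + 1) * j%:R + t%:R + 1 + 1 + 1) * x / (t%:R + 1).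
  apply: (mulfI n1); rewrite e1; by field.
have hw4 : w4 = ((0 + 1 + 1) * j%:R + t%:R + 1 + 1 + 1 + 1) * w3 / (t%:R + 1 + 1).
  apply: (mulfI n2); rewrite e2; by field.
have hy : y = ((0 + 1 + 1) * j%:R + 1 + 1) * x / (t%:R + 1).
  apply: (mulfI n1); rewrite -e4; by field.
have hg : g = ((0 + 1 + 1) * j%:R + 1) * y / (t%:R + 1 + 1).
  apply: (mulfI n2); rewrite -e3; by field.
have hd : d0 = (j%:R + 1 + 1) * d1 / ((0 + 1 + 1) * ((0 + 1 + 1) * j%:R + 1)).
  have n4 : (0 + 1 + 1) * ((0 + 1 + 1) * j%:R + 1) != 0 :> R.
    have h2 := hS 1%N; rewrite !mulrSr in h2; by rewrite mulf_neq0.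
  apply: (mulfI n4); by rewrite -e5 [RHS]mulrC divfK.
rewrite hw4 hw3 hg hy hd. field.
have n5 := hS (2 * j)%N; rewrite mulrSr natrM in n5.
by rewrite n1 n2 n5.
Qed.

Definition prevdd (n k : nat) : nat := if k is j.+1 then dd n j else 0%N.

Lemma lin_all n k :
  ((n + 3) * dd (n + 2) k + n * dd n k
   = (2 * n + 3) * (dd n.+1 k + 2 * prevdd n.+1 k))%N.
Proof.
case: k => [|j].
  have c0 : catalan 0 = 1%N by [].
  rewrite /prevdd /dd /= !bin0 !muln1; lia.
rewrite /prevdd.
have [hjn|hjn] := leqP j.+1 n.
  have e : n = (j + 1 + (n - j.+1))%N by lia.
  have := @lin_gen rat j (n - j.+1).
  rewrite -e /= => /eqP; rewrite -!(natrM, natrD) eqr_nat => /eqP h. exact h.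
case: (ltngtP j n) => [hj|hj|<-]; first by lia.
- case: (ltngtP j n.+1) => [hj1|hj1|->]; first by lia.
  + rewrite /dd !bin_small; [lia|lia|lia|lia|lia].
  + have h := catalanS n.+1.
    rewrite /dd.
    have -> : 'C(n + n.+2, n.+2.*2) = 0%N by rewrite bin_small //; lia.
    have -> : 'C(n.+1 + n.+2, n.+2.*2) = 0%N by rewrite bin_small //; lia.
    have -> : (n + 2 + n.+2 = (n.+2).*2)%N by lia.
    have -> : (n.+1 + n.+1 = (n.+1).*2)%N by lia.
    rewrite !binn. lia.
- have h := catalanS j.
  rewrite /dd. have -> : 'C(j + j.+1, j.+1.*2) = 0%N by rewrite bin_small //; lia.
  have -> : (j + 2 + j.+1 = (j.+1.*2).+1)%N by lia.
  have -> : (j.+1 + j.+1 = j.+1.*2)%N by lia.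
  have -> : (j.+1 + j = (j.*2).+1)%N by lia.
  rewrite !binSn binn. nia.
Qed.

Lemma quad_nat K m :
  dd K.+1 m.+1 = (dd K m.+1 +
     \sum_(l < K.+1) \sum_(j < m.+1) dd l j * dd (K - l) (m - j))%N.
Proof.
rewrite exchange_big /=.
have -> : (\sum_(j < m.+1) \sum_(l < K.+1) dd l j * dd (K - l) (m - j) =
   \sum_(j < m.+1) catalan j * catalan (m - j) * 'C((K + m).+1, m.*2.+1))%N.
  apply: eq_bigr => j _.
  have hj : (j <= m)%N by rewrite -ltnS.
  have := uv_off K j (m - j).
  have -> : ((K + j + (m - j)).+1 = (K + m).+1)%N by lia.
  have -> : ((j.*2 + (m - j).*2).+1 = m.*2.+1)%N by lia.
  move=> h; rewrite -h big_distrr /= big_mkord.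
  apply: eq_bigr => l _.
  rewrite /dd; ring.
rewrite -big_distrl /= -/(Tc m) catalan_conv /dd.
have -> : (K.+1 + m.+1 = (K + m).+1.+1)%N by lia.
have -> : (K + m.+1 = (K + m).+1)%N by lia.
rewrite doubleS binS; ring.
Qed.

Definition pK (R : numFieldType) (K : nat) : {poly R} := \poly_(k < K.+1) (dd K k)%:R.

Lemma coef_pK (R : numFieldType) K k : (pK R K)`_k = (dd K k)%:R.
Proof.
rewrite coef_poly; case: ltnP => // h.
by rewrite /dd bin_small ?muln0 //; lia.
Qed.

Lemma bK_pK (R : numFieldType) K (z : R) : bK K z = (pK R K).[z].
Proof.
rewrite horner_poly /bK big_mkord; apply: eq_bigr => k _.
have hk := ltn_ord k.
congr (_%:R * _); rewrite /dd; congr (_ * _)%N.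
have e : (K - k = K + k - k.*2)%N by lia.
rewrite e bin_sub //; lia.
Qed.

Lemma quad_poly (R : numFieldType) K :
  pK R K.+1 = pK R K + 'X * \sum_(l < K.+1) pK R l * pK R (K - l).
Proof.
apply/polyP => m; rewrite coefD coefXM coef_sum !coef_pK.
case: m => [|m] /=.
  by rewrite /dd !addn0 !bin0 addr0.
rewrite quad_nat natrD natr_sum; congr (_ + _).
apply: eq_bigr => l _; rewrite coefM natr_sum; apply: eq_bigr => j _.
by rewrite !coef_pK natrM.
Qed.

Lemma lin_poly (R : numFieldType) n :
  (n.+3)%:R%:P * pK R n.+2 = (2 * n + 3)%N%:R%:P * (pK R n.+1 + 2%:P * ('X * pK R n.+1))
     - n%:R%:P * pK R n.
Proof.
apply/polyP => k; rewrite coefB !coefCM coefD coefCM coefXM !coef_pK.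
have L := congr1 (GRing.natmul (1 : R)) (lin_all n k).
have -> : (if k == 0%N then 0 else (dd n.+1 k.-1)%:R) = (prevdd n.+1 k)%:R :> R.
  by case: k {L}.
rewrite addn2 in L.
move: L; move: (dd n.+2 k) (dd n k) (dd n.+1 k) (prevdd n.+1 k) => a b c d.
rewrite !(natrD, natrM) => L.
by rewrite -L addrK -addn3 natrD.
Qed.

Theorem lemma4 (R : numFieldType) (z : R) :
  (forall K : nat, (2 <= K)%N ->
     K.+1%:R * bK K z
     = (K.*2 - 1)%N%:R * (1 + 2 * z) * bK K.-1 z - (K%:R - 2) * bK K.-2 z)
  /\ (forall K : nat,
     bK K.+1 z = bK K z + z * \sum_(0 <= l < K.+1) bK l z * bK (K - l) z)
  /\ bK 0 z = 1 /\ bK 1 z = 1 + z.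
Proof.
split.
  case=> [|[|n]] // _ /=.
  have E := congr1 (horner^~ z) (lin_poly R n).
  rewrite /= !(hornerD, hornerN, hornerM, hornerC, hornerX) in E.
  rewrite !(bK_pK R).
  have -> : (n.+2.*2 - 1)%N = (2 * n + 3)%N by lia.
  have -> : n.+2%:R - 2 = n%:R :> R by rewrite -addn2 natrD addrK.
  rewrite E; ring.
split.
  move=> K.
  have E := congr1 (horner^~ z) (quad_poly R K).
  rewrite /= hornerD hornerM hornerX horner_sum in E.
  rewrite !(bK_pK R) E big_mkord; congr (_ + _ * _).
  by apply: eq_bigr => l _; rewrite !(bK_pK R) hornerM.
split.
  by rewrite /bK big_nat1 /= expr0 mulr1.
rewrite /bK big_nat_recr //= big_nat1 /= expr0 expr1 mulr1.
by rewrite -[X in X + _]/(1%N%:R) -[X in _ + X * _]/(1%N%:R) mul1r.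
Qed.
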